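(* Let $\mathcal{B}$ be the Borel $\sigma$-algebra of $[0,1]$ and let $\mathcal{D}=\{f^{-1}(B):B\in\mathcal{B}\}$, where $f\colon[0,1]\to[0,1]$ is constructed as described in the context. Then the $\sigma$-algebra $$\big((\mathcal{D}\vee\mathcal{B})\otimes\mathcal{B}\big)\cap\big((\mathcal{D}\vee\mathcal{B})\otimes\mathcal{D}\big)$$ on $[0,1]^2$ is not of the form $\mathcal{A}_0\otimes\mathcal{E}$ for any $\sigma$-algebras $\mathcal{A}_0,\mathcal{E}$ on $[0,1]$.
   Context: Construction of $f$: let $\omega_{\mathfrak{c}}$ be the first ordinal of cardinality $\mathfrak{c}$ (the continuum), and let $(M_\alpha)_{1\le\alpha<\omega_{\mathfrak{c}}}$ be an enumeration of all uncountable Borel subsets of $[0,1]$ with uncountable complement. By transfinite recursion choose for each $\alpha<\omega_{\mathfrak{c}}$ three distinct points $x_\alpha,y_\alpha\in M_\alpha$, $z_\alpha\in[0,1]\setminus M_\alpha$ with $\{x_\alpha,y_\alpha,z_\alpha\}\cap\bigcup_{\beta<\alpha}\{x_\beta,y_\beta,z_\beta\}=\emptyset$. Define $f$ by $f(x_\alpha)=z_\alpha$, $f(z_\alpha)=x_\alpha$ for every $\alpha$, and $f(t)=t$ for all other $t$ (in particular $f(y_\alpha)=y_\alpha$). For $\sigma$-algebras $\mathcal{F},\mathcal{G}$ on a set, $\mathcal{F}\vee\mathcal{G}$ is the smallest $\sigma$-algebra containing $\mathcal{F}\cup\mathcal{G}$; $\otimes$ denotes the product $\sigma$-algebra (generated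 by measurable rectangles). *)

(* Defs.v *)
From HB Require Import structures.
From mathcomp Require Import all_boot all_order all_algebra.
From mathcomp Require Import all_classical all_reals all_analysis.
Set Implicit Arguments. Unset Strict Implicit. Unset Printing Implicit Defensive.
Import Order.TTheory GRing.Theory Num.Theory numFieldTopology.Exports numFieldNormedType.Exports.
Local Open Scope classical_set_scope.
Local Open Scope ring_scope.

Definition I01 (R : realType) : Type := {x : R | 0 <= x <= 1}.

Definition borelR (R : realType) : set (set R) := <<s [set U : set R | open U] >>.

Definition borel01 (R : realType) : set (set (I01 R)) :=
  [set A | exists B : set R, borelR B /\ A = (@sval R _) @^-1` B].

Definition sjoin (T : Type) (F G : set (set T)) : set (set T) := <<s F `|` G >>.

Definition sprod (T1 T2 : Type) (F : set (set T1)) (G : set (set T2))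
  : set (set (T1 * T2)) :=
  <<s [set A `*` B | A in F & B in G] >>.

Definition spreim (T U : Type) (f : T -> U) (G : set (set U)) : set (set T) :=
  [set f @^-1` B | B in G].

Definition bad_set (R : realType) (M : set (I01 R)) : Prop :=
  @borel01 R M /\ ~ countable M /\ ~ countable (~` M).

(* f arises from the construction in the paper: an enumeration (M_a)_{a in I}
   of all uncountable Borel sets with uncountable complement, points
   x_a, y_a in M_a, z_a notin M_a, pairwise distinct, triples disjoint across
   indices, f swapping x_a and z_a and fixing every other point. *)
Definition constructed (R : realType) (f : I01 R -> I01 R) : Prop :=
  exists (I : Type) (M : I -> set (I01 R)) (x y z : I -> I01 R),
    [/\ (forall a, bad_set (M a)),
        (forall A, bad_set A -> exists a, M a = A),
        (forall a, [/\ M a (x a), M a (y a), ~ M a (z a) & x a <> y a]),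
        (forall a b, a <> b ->
           [set x a; y a; z a] `&` [set x b; y b; z b] = set0) &
        [/\ (forall a, f (x a) = z a),
            (forall a, f (z a) = x a) &
            (forall t, (forall a, t <> x a /\ t <> z a) -> f t = t)]].

(* Main.v *)
Require Import Defs.
From HB Require Import structures.
From mathcomp Require Import all_boot all_order all_algebra.
From mathcomp Require Import all_classical all_reals all_analysis.
Import Order.TTheory GRing.Theory Num.Theory numFieldTopology.Exports numFieldNormedType.Exports.
Local Open Scope classical_set_scope.

Section Helpers.
Local Open Scope ring_scope.

Lemma saC {T} {S : set (set T)} : sigma_algebra setT S -> forall A, S A -> S (~` A).
Proof. by case=> _ h _ A /h; rewrite setTD. Qed.

Lemma saU {T} {S : set (set T)} : sigma_algebra setT S ->
  forall F : (set T)^nat, (forall n, S (F n)) -> S (\bigcup_n F n).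
Proof. by case. Qed.

Lemma sa0 {T} {S : set (set T)} : sigma_algebra setT S -> S set0.
Proof. by case. Qed.

Lemma saT {T} {S : set (set T)} : sigma_algebra setT S -> S setT.
Proof. by move=> h; have := saC h _ (sa0 h); rewrite setC0. Qed.

Lemma saU2 {T} {S : set (set T)} : sigma_algebra setT S ->
  forall A B, S A -> S B -> S (A `|` B).
Proof.
move=> h A B a b; rewrite -bigcup2E; apply: saU => // -[|[|n]] //=; exact: sa0.
Qed.

Lemma saI2 {T} {S : set (set T)} : sigma_algebra setT S ->
  forall A B, S A -> S B -> S (A `&` B).
Proof.
move=> h A B a b; rewrite -[A `&` B]setCK setCI.
by apply: saC => //; apply: saU2 => //; apply: saC.
Qed.

Lemma saD {T} {S : set (set T)} : sigma_algebra setT S ->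
  forall A B, S A -> S B -> S (A `\` B).
Proof. by move=> h A B a b; rewrite setDE; apply: saI2 => //; apply: saC. Qed.

Lemma countableU2 {T} {A B : set T} : countable A -> countable B -> countable (A `|` B).
Proof.
move=> cA cB; rewrite -bigcup2E; apply: bigcup_countable; first exact: countableP.
by move=> [|[|n]] _ //=; exact: countable0.
Qed.

Lemma countable_sub {T} {A B : set T} : A `<=` B -> countable B -> countable A.
Proof. by move=> AB; apply: sub_countable; exact: subset_card_le. Qed.

Lemma borel01_sa R : sigma_algebra setT (@borel01 R).
Proof.
split.
- exists set0; split; last by rewrite preimage_set0.
  exact: sigma_algebra0.
- move=> _ [B [hB ->]]; exists (~` B); split; last by rewrite setTD preimage_setC.
  by rewrite -setTD; exact: sigma_algebraCD.
- move=> F hF; have /choice [G hG] := hF.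
  exists (\bigcup_n G n); split.
    by apply: sigma_algebra_bigcup => n; exact: (hG n).1.
  rewrite preimage_bigcup; apply: eq_bigcupr => n _; exact: (hG n).2.
Qed.

Lemma spreim_sa T U (f : T -> U) (G : set (set U)) :
  sigma_algebra setT G -> sigma_algebra setT (spreim f G).
Proof.
move=> sG; split.
- by exists set0; [exact: sa0|rewrite preimage_set0].
- move=> _ [B hB <-]; exists (~` B); first exact: saC.
  by rewrite setTD preimage_setC.
- move=> F hF.
  have /choice [G' hG] : forall n, exists B, G B /\ f @^-1` B = F n.
    by move=> n; have [B hB e] := hF n; exists B.
  exists (\bigcup_n G' n); first by apply: saU => // n; exact: (hG n).1.
  rewrite preimage_bigcup; apply: eq_bigcupr => n _; exact: (hG n).2.
Qed.

Lemma sprod_sec T1 T2 (F : set (set T1)) (G : set (set T2)) :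
  sigma_algebra setT G -> forall W, sprod F G W -> forall x, G [set y | W (x, y)].
Proof.
move=> sG W; apply: (@smallest_sub _ _ _ [set W | forall x, G [set y | W (x, y)]]);
  last first.
  move=> _ [A FA [B GB <-]] x.
  have [Ax|nAx] := pselect (A x).
    rewrite (_ : [set y | _] = B) //.
    by apply/seteqP; split=> y /=; [case| ].
  rewrite (_ : [set y | _] = set0); first exact: sa0 sG.
  by apply/seteqP; split => y //= [].
split.
- by move=> x; rewrite (_ : [set y | _] = set0); [exact: sa0 sG|apply/seteqP; split].
- move=> A hA x; rewrite (_ : [set y | _] = ~` [set y | A (x, y)]).
    exact: saC sG _ (hA x).
  by apply/seteqP; split => y /=; [case|].
- move=> Fs hF x; rewrite (_ : [set y | _] = \bigcup_n [set y | Fs n (x, y)]).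
    exact: saU sG _ (fun n => hF n x).
  by apply/seteqP; split => y /=.
Qed.


Definition cq {T1 T2} (W : set (T1 * T2)) := exists Q : set T2, countable Q /\
  forall x y1 y2, ~ Q y1 -> ~ Q y2 -> W (x, y1) -> W (x, y2).

Lemma sprod_cq T1 T2 (F : set (set T1)) (E : set (set T2)) :
  (forall e, E e -> countable e \/ countable (~` e)) ->
  forall W, sprod F E W -> cq W.
Proof.
move=> hE W; apply: smallest_sub; last first.
  move=> _ [A _ [B EB <-]]; case: (hE _ EB) => cB.
    by exists B; split=> // x y1 y2 n1 _ [_ /n1].
  exists (~` B); split => // x y1 y2 n1 n2 [Ax _]; split => //.
  by have [//|nB] := pselect (B y2); exfalso; exact: n2.
split.
- by exists set0; split; [exact: countable0|move=> x y1 y2 _ _ []].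
- move=> A [Q [cQ hQ]]; exists Q; split => // x y1 y2 n1 n2 [_ nA]; split => // Ay2.
  by apply: nA; exact: hQ x y2 y1 n2 n1 Ay2.
- move=> Fs hF; have /choice [Q hQ] := hF.
  exists (\bigcup_n Q n); split.
    by apply: bigcup_countable => [|n _]; [exact: countableP|exact: (hQ n).1].
  move=> x y1 y2 n1 n2 [n _ Fn]; exists n => //.
  by apply: (hQ n).2 _ _ _ _ _ Fn => q; [apply: n1|apply: n2]; exists n.
Qed.

Lemma diag_sprod (R : realType) T (F1 F2 : set (set T)) (g : T -> R) :
  injective g ->
  (forall r, F1 [set t | (g t < r)%R] /\ F1 [set t | (r < g t)%R]) ->
  (forall r, F2 [set t | (g t < r)%R] /\ F2 [set t | (r < g t)%R]) ->
  sprod F1 F2 [set p | p.1 = p.2].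
Proof.
move=> ig h1 h2.
pose q n : R := if @pickle_inv rat n is Some q then ratr q else 0%R.
pose Lo (r : R) := [set t | (g t < r)%R].
pose Up (r : R) := [set t | (r < g t)%R].
have -> : [set p : T * T | p.1 = p.2] =
    ~` \bigcup_n ((Lo (q n) `*` Up (q n)) `|` (Up (q n) `*` Lo (q n))).
  apply/seteqP; split => [[a b] /= -> [n _]|[a b] /= H].
    by rewrite /Lo /Up /= => -[[/= h h']|[/= h h']]; have := lt_trans h h'; rewrite ltxx.
  have [//|nab] := pselect (a = b); exfalso; apply: H.
  have : g a != g b by apply/eqP => /ig.
  rewrite neq_lt => /orP[ab|ba].
  - have [r] := rat_in_itvoo ab; rewrite in_itv /= => /andP[r1 r2].
    exists (pickle r) => //; left; rewrite /q pickleK_inv; split => //.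
  - have [r] := rat_in_itvoo ba; rewrite in_itv /= => /andP[r1 r2].
    exists (pickle r) => //; right; rewrite /q pickleK_inv; split => //.
have sS : sigma_algebra setT (sprod F1 F2) by exact: smallest_sigma_algebra.
apply: (saC sS); apply: (saU sS) => n; apply: (saU2 sS); apply: sub_sigma_algebra.
- by exists (Lo (q n)); [exact: (h1 _).1|exists (Up (q n)) => //; exact: (h2 _).2].
- by exists (Up (q n)); [exact: (h1 _).2|exists (Lo (q n)) => //; exact: (h2 _).1].
Qed.

Lemma f_invol R (f : I01 R -> I01 R) : constructed f -> forall t, f (f t) = t.
Proof.
move=> [I [M [x [y [z [_ _ _ _ [fx fz fo]]]]]]] t.
have [[a [->|->]]|nt] := pselect (exists a, t = x a \/ t = z a).
- by rewrite fx fz.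
- by rewrite fz fx.
have ft : f t = t by apply: fo => a; split => h; apply: nt; exists a; [left|right].
by rewrite !ft.
Qed.

Lemma key R (f : I01 R -> I01 R) : constructed f ->
  forall e, borel01 e -> spreim f (@borel01 R) e -> countable e \/ countable (~` e).
Proof.
move=> [I [M [x [y [z [hM hsurj hxyz hdisj [fx fz fo]]]]]]] e Be [N BN eN].
have fy : forall c, f (y c) = y c.
  move=> c; apply: fo => a; have [Mx My nMz xy] := hxyz c.
  have [->|ac] := pselect (a = c).
    split => h; [exact: xy (esym h)|by apply: nMz; rewrite -h].
  have := hdisj _ _ ac; move/seteqP => [H _].
  split => h; apply: (H (y c)); split.
  - by rewrite h /=; left; left.
  - by rewrite /=; left; right.
  - by rewrite h /=; right.
  - by rewrite /=; left; right.
have sB := borel01_sa R.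
have [//|ce] := pselect (countable e); first by left.
have [//|cce] := pselect (countable (~` e)); first by right.
exfalso.
have BK : borel01 (e `\` N) by apply: saD.
have Kc : countable (e `\` N).
  have [//|nK] := pselect (countable (e `\` N)); exfalso.
  have nK' : ~ countable (~` (e `\` N)).
    move=> h; apply: cce; apply: (countable_sub _ h) => t nt [et _]; exact: nt et.
  have [c Mc] := hsurj _ (conj BK (conj nK nK')).
  have [_ My _ _] := hxyz c; rewrite Mc in My; case: My => ey nNy.
  by apply: nNy; move: ey; rewrite -eN /preimage /= fy.
have BP : borel01 (e `&` N) by apply: saI2.
have bad : bad_set (e `&` N).
  split => //; split.
    move=> h; apply: ce; apply: (countable_sub _ (countableU2 h Kc)) => t et.
    by have [Nt|Nt] := pselect (N t); [left|right].
  by move=> h; apply: cce; apply: (countable_sub _ h) => t net [].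
have [d Md] := hsurj _ bad.
have [Mx _ nz _] := hxyz d; rewrite Md in Mx nz; case: Mx => ex Nx.
apply: nz; split; last by move: ex; rewrite -eN /preimage /= fx.
by rewrite -eN /preimage /= fz.
Qed.

Lemma I01_unc R : ~ countable (@setT (I01 R)).
Proof.
move=> h.
have : countable (`]0, 1[%classic : set R).
  apply: (countable_sub _ (sub_countable (card_image_le (@sval R _) setT) h)).
  move=> r; rewrite /= in_itv /= => /andP[r0 r1].
  have hr : ((0 <= r) && (r <= 1))%R by rewrite !ltW.
  by exists (exist _ r hr).
move/(countable_lebesgue_measure0 (R:=R)).
rewrite lebesgue_measure_itv /= lte_fin ltr01 oppr0 adde0.
by move=> /eqP; rewrite eqe oner_eq0.
Qed.
End Helpers.

Theorem corollary2p5 (R : realType) (f : I01 R -> I01 R) :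
  constructed f ->
  let B := @borel01 R in
  let D := spreim f B in
  ~ exists (A0 E : set (set (I01 R))),
      [/\ sigma_algebra setT A0, sigma_algebra setT E &
          sprod (sjoin D B) B `&` sprod (sjoin D B) D = sprod A0 E].
Proof.
move=> hf B D [A0 [E [sA0 sE hEq]]].
have sB : sigma_algebra setT B := borel01_sa R.
have sD : sigma_algebra setT D := @spreim_sa _ _ f _ sB.
have x0 : I01 R.
  by exists 0%R; rewrite lexx ler01.
have hE : forall e, E e -> countable e \/ countable (~` e).
  move=> e Ee.
  have W : sprod A0 E (setT `*` e).
    by apply: sub_sigma_algebra; exists setT; [exact: saT sA0|exists e].
  rewrite -hEq in W; case: W => W1 W2.
  have sec : [set y | (setT `*` e) (x0, y)] = e.
    by apply/seteqP; split => y /=; [case|].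
  have Be : B e by rewrite -sec; exact: sprod_sec _ _ _ _ sB _ W1 x0.
  have De : D e by rewrite -sec; exact: sprod_sec _ _ _ _ sD _ W2 x0.
  exact: key _ _ hf _ Be De.
have BJ : forall A, B A -> sjoin D B A by move=> A hA; apply: sub_sigma_algebra; right.
have DJ : forall A, D A -> sjoin D B A by move=> A hA; apply: sub_sigma_algebra; left.
have lt_B : forall r : R, B [set t | (sval t < r)%R].
  move=> r; exists [set x | (x < r)%R]; split => //.
  by apply: sub_sigma_algebra; exact: open_lt.
have gt_B : forall r : R, B [set t | (r < sval t)%R].
  move=> r; exists [set x | (r < x)%R]; split => //.
  by apply: sub_sigma_algebra; exact: open_gt.
have inj_sval : injective (@sval R (fun x => (0 <= x <= 1)%R)).
  move=> [a ha] [b hb] /= ab; subst b; congr exist; exact: Prop_irrelevance.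
have finj : injective f.
  by move=> a b /(congr1 f); rewrite !(f_invol _ _ hf).
have Delta : sprod A0 E [set p | p.1 = p.2].
  rewrite -hEq; split.
  - apply: (@diag_sprod R _ _ _ (@sval R _)) => // r.
      by split; apply: BJ.
  - apply: (@diag_sprod R _ _ _ (fun t => @sval R _ (f t))).
    + by move=> a b /inj_sval /finj.
    + move=> r; split; apply: DJ.
      * by exists [set t | (sval t < r)%R].
      * by exists [set t | (r < sval t)%R].
    + move=> r; split.
      * by exists [set t | (sval t < r)%R].
      * by exists [set t | (r < sval t)%R].
have [Q [cQ hQ]] := sprod_cq _ _ _ _ hE _ Delta.
have [y1 [y2 [n1 [n2 y12]]]] : exists y1 y2, ~ Q y1 /\ ~ Q y2 /\ y1 <> y2.
  have [//|H] := pselect (exists y1 y2, ~ Q y1 /\ ~ Q y2 /\ y1 <> y2).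
  exfalso; apply: (@I01_unc R).
  have [[y0 ny0]|nex] := pselect (exists y0, ~ Q y0).
    apply: (countable_sub _ (countableU2 cQ (countable1 y0))) => t _.
    have [qt|qt] := pselect (Q t); [by left|right].
    have [//|nt] := pselect (t = y0); exfalso; apply: H.
    by exists t, y0.
  apply: (countable_sub _ cQ) => t _.
  by have [//|qt] := pselect (Q t); exfalso; apply: nex; exists t.
by apply: y12; exact: (hQ y1 y1 y2 n1 n2 erefl).
Qed.
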